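(* Let $\mathbb{K}$ be either $\mathbb{R}$ or $\mathbb{C}$, with all coefficients and solutions in $\mathbb{K}$. Let $D$ be a positive integer and $1\le D<q\le\infty$. For $k\in\{1,\dots,D\}$ let $\mathcal{D}_k=\{(d_1,\dots,d_k)\in\mathbb{N}^k: d_1+\cdots+d_k\le D\}$. Let $I$ be an infinite set. For all $i\in I$ and $d\in\{1,\dots,D\}$ let $\mathbf{a}_{i,d}=(a_{i,d,j})_{j=1}^\infty\in\ell^{q/(q-d)}$, $(\mathbf{a}_{i,d},\mathbf{x}^d)=\sum_{j=1}^\infty a_{i,d,j}x_j^d$, and \[ P_i(\mathbf{x})=\sum_{k=1}^D\sum_{(d_1,\dots,d_k)\in\mathcal{D}_k}(\mathbf{a}_{i,d_1},\mathbf{x}^{d_1})\cdots(\mathbf{a}_{i,d_k},\mathbf{x}^{d_k}). \] Let $\mathbf{b}=(b_i)_{i\in I}$ with $b_i\in\mathbb{K}$, and let $\mathbf{m}=(m_j)_{j=1}^\infty\in\ell^q$ with $m_j\ge 0$ for all $j\in\mathbb{N}$. If for every $\varepsilon>0$ and every finite subset $S$ of $I$ the finite set of inequalities $\{|P_i(\mathbf{x})-b_i|\le\varepsilon : i\in S\}$ has a solution $\mathbf{x}_{S,\varepsilon}=(x_{S,\varepsilon,j})_{j=1}^\infty\in\ell^q$ with $|x_{S,\varepsilon,j}|\le m_j$ for all $j\in\mathbb{N}$, then the infinite set of equations $\{P_i(\mathbf{x})=b_i : i\in I\}$ has an exact solution $\mathbf{x}=(x_j)_{j=1}^\infty\in\ell^q$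 with $|x_j|\le m_j$ for all $j\in\mathbb{N}$.
   Context: $\mathbb{N}=\{1,2,3,\dots\}$. For $q=\infty$ one sets $q/(q-d)=1$. $\ell^p$ ($1\le p<\infty$) denotes sequences with $\|\mathbf{a}\|_p=(\sum_j|a_j|^p)^{1/p}<\infty$, and $\ell^\infty$ bounded sequences with the sup norm; $\mathbf{x}^d=(x_j^d)_{j\ge1}$. For $\mathbf{x}\in\ell^q$ each series $(\mathbf{a}_{i,d},\mathbf{x}^d)$ converges absolutely by Hölder's inequality. $P_i$ is the multiplicative polynomial $\sum_{k}\sum_{\Delta\in\mathcal{D}_k}\sum_{J\in\mathbb{N}^k}a_{i,\Delta,J}x_J^\Delta$ with coefficients $a_{i,(d_1,\dots,d_k),(j_1,\dots,j_k)}=a_{i,d_1,j_1}\cdots a_{i,d_k,j_k}$. *)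

(* Defs.v *)
From mathcomp Require Import all_boot all_algebra.
From mathcomp Require Import all_classical all_reals all_analysis.
From mathcomp Require Import complex.
Import GRing.Theory Num.Theory numFieldNormedType.Exports.

Set Implicit Arguments.
Unset Strict Implicit.
Unset Printing Implicit Defensive.

Local Open Scope classical_set_scope.
Local Open Scope ring_scope.

Section Defs.
Variable R : realType.
Variable K : numFieldType.
Variable nrm : K -> R.

Definition in_lp (p : \bar R) (a : nat -> K) : Prop :=
  match p with
  | r%:E => cvg (series (fun j => nrm (a j) `^ r) @ \oo)
  | +oo%E => exists M : R, forall j, nrm (a j) <= M
  | -oo%E => False
  end.

Definition dual_exp (q : \bar R) (d : nat) : \bar R :=
  match q with
  | r%:E => (r / (r - d%:R))%:E
  | _ => 1%:E
  end.

Definition pairing (a x : nat -> K) (d : nat) : K :=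
  limn (series (fun j => a j * x j ^+ d)).

(* Encoding: k = k'.+1 with k' < D, d_l = (t l).+1 with
   t l : 'I_D (each d_l in {1..D}); D_k = tuples of positive integers with
   sum <= D (which forces each d_l <= D). *)
Definition Ppoly (D : nat) (a : nat -> nat -> K) (x : nat -> K) : K :=
  \sum_(k < D)
    \sum_(t : {ffun 'I_k.+1 -> 'I_D} | (\sum_(l < k.+1) (t l).+1 <= D)%N)
      \prod_(l < k.+1) pairing (a (t l).+1) x (t l).+1.

End Defs.

(* The statement of Theorem 5 for a given scalar field K with modulus nrm.
   Indices j in N = {1,2,...} are shifted to nat = {0,1,...}. *)
Definition theorem5_statement (R : realType) (K : numFieldType)
    (nrm : K -> R) : Prop :=
  forall (D : nat) (q : \bar R) (I : Type)
         (a : I -> nat -> nat -> K) (b : I -> K) (m : nat -> R),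
    (1 <= D)%N ->
    (D%:R%:E < q)%E ->
    infinite_set [set: I] ->
    (forall i d, (1 <= d <= D)%N -> in_lp nrm (dual_exp q d) (a i d)) ->
    in_lp (fun r : R => `|r|) q m ->
    (forall j, 0 <= m j) ->
    (forall eps : R, 0 < eps -> forall S : set I, finite_set S ->
       exists x : nat -> K,
         [/\ in_lp nrm q x, (forall j, nrm (x j) <= m j) &
             forall i, S i -> nrm (Ppoly D (a i) x - b i) <= eps]) ->
    exists x : nat -> K,
      [/\ in_lp nrm q x, (forall j, nrm (x j) <= m j) &
          forall i, Ppoly D (a i) x = b i].

(* Main.v *)
Require Import Defs.
From mathcomp Require Import all_boot all_algebra.
From mathcomp Require Import all_classical all_reals all_analysis.
From mathcomp Require Import complex.
From mathcomp Require Import ring lra zify.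
Import order.Order.TTheory GRing.Theory Num.Theory numFieldNormedType.Exports.
Local Open Scope ring_scope.
Local Open Scope classical_set_scope.
Section UCB.
Variables (R : realType) (K : numFieldType) (nrm : K -> R).
Hypothesis nrm_ge0 : forall x, 0 <= nrm x.
Hypothesis nrmD : forall x y, nrm (x + y) <= nrm x + nrm y.
Hypothesis nrmM : forall x y, nrm (x * y) = nrm x * nrm y.
Hypothesis nrmN : forall x, nrm (- x) = nrm x.
Hypothesis nrm0 : nrm 0 = 0.
Hypothesis nrm1 : nrm 1 = 1.
Variable m : nat -> R.

Definition inB (x : nat -> K) := forall j, nrm (x j) <= m j.

Definition UCB (f : (nat -> K) -> K) :=
  (exists C, forall x, inB x -> nrm (f x) <= C) /\
  forall e, 0 < e -> exists N, exists2 d, 0 < d &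
     forall x y, inB x -> inB y -> (forall j, (j < N)%N -> nrm (x j - y j) < d) ->
       nrm (f x - f y) <= e.

Lemma nrm_sum (I : Type) (r : seq I) (P : pred I) (F : I -> K) :
  nrm (\sum_(i <- r | P i) F i) <= \sum_(i <- r | P i) nrm (F i).
Proof.
elim: r => [|i r IH]; first by rewrite !big_nil nrm0.
rewrite !big_cons; case: (P i) => //.
by apply: le_trans (nrmD _ _) _; rewrite lerD2l.
Qed.

Lemma nrmX x n : nrm (x ^+ n) = nrm x ^+ n.
Proof. by elim: n => [|n IH]; rewrite ?expr0 ?nrm1 // !exprS nrmM IH. Qed.

Lemma UCB_cst c : UCB (fun _ => c).
Proof.
split; first by exists (nrm c).
move=> e e0; exists 0%N; exists 1 => // x y _ _ _; rewrite subrr nrm0; exact: ltW.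
Qed.

Lemma UCB_add f g : UCB f -> UCB g -> UCB (fun x => f x + g x).
Proof.
move=> [[Cf Hf] Uf] [[Cg Hg] Ug]; split.
  exists (Cf + Cg) => x Bx; apply: le_trans (nrmD _ _) _; exact: lerD (Hf _ Bx) (Hg _ Bx).
move=> e e0.
have e20 : 0 < e / 2 by rewrite divr_gt0.
have [N1 [d1 d10 H1]] := Uf _ e20.
have [N2 [d2 d20 H2]] := Ug _ e20.
exists (maxn N1 N2); exists (Num.min d1 d2); first by rewrite lt_min d10 d20.
move=> x y Bx By Hxy.
have -> : f x + g x - (f y + g y) = (f x - f y) + (g x - g y) by ring.
apply: le_trans (nrmD _ _) _; rewrite [e](splitr e); apply: lerD.
  apply: H1 => // j jN; have := Hxy j (leq_trans jN (leq_maxl _ _)).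
  by rewrite lt_min => /andP[].
apply: H2 => // j jN; have := Hxy j (leq_trans jN (leq_maxr _ _)).
by rewrite lt_min => /andP[].
Qed.

Lemma UCB_mul f g : UCB f -> UCB g -> UCB (fun x => f x * g x).
Proof.
move=> [[Cf Hf] Uf] [[Cg Hg] Ug]; split.
  exists (`|Cf| * `|Cg|) => x Bx; rewrite nrmM.
  apply: ler_pM => //; [exact: le_trans (Hf _ Bx) (ler_norm _)|
                       exact: le_trans (Hg _ Bx) (ler_norm _)].
set Cf1 := `|Cf| + 1; set Cg1 := `|Cg| + 1.
have Cf10 : 0 < Cf1 by rewrite /Cf1 ltr_wpDl.
have Cg10 : 0 < Cg1 by rewrite /Cg1 ltr_wpDl.
have Hf1 x : inB x -> nrm (f x) <= Cf1.
  move=> Bx; apply: le_trans (Hf _ Bx) _; apply: le_trans (ler_norm _) _.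
  by rewrite /Cf1 lerDl.
have Hg1 x : inB x -> nrm (g x) <= Cg1.
  move=> Bx; apply: le_trans (Hg _ Bx) _; apply: le_trans (ler_norm _) _.
  by rewrite /Cg1 lerDl.
move=> e e0.
have e1 : 0 < e / 2 / Cg1 by rewrite !divr_gt0.
have e2 : 0 < e / 2 / Cf1 by rewrite !divr_gt0.
have [N1 [d1 d10 H1]] := Uf _ e1.
have [N2 [d2 d20 H2]] := Ug _ e2.
exists (maxn N1 N2); exists (Num.min d1 d2); first by rewrite lt_min d10 d20.
move=> x y Bx By Hxy.
have -> : f x * g x - f y * g y = f x * (g x - g y) + (f x - f y) * g y by ring.
apply: le_trans (nrmD _ _) _; rewrite [e](splitr e) !nrmM; apply: lerD.
  apply: le_trans (_ : Cf1 * (e / 2 / Cf1) <= _).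
    apply: ler_pM => //; first exact: Hf1.
    apply: H2 => // j jN; have := Hxy j (leq_trans jN (leq_maxr _ _)).
    by rewrite lt_min => /andP[].
  by rewrite mulrC divfK // gt_eqF.
apply: le_trans (_ : (e / 2 / Cg1) * Cg1 <= _).
  apply: ler_pM => //; last exact: Hg1.
  apply: H1 => // j jN; have := Hxy j (leq_trans jN (leq_maxl _ _)).
  by rewrite lt_min => /andP[].
by rewrite divfK // gt_eqF.
Qed.

Lemma UCB_sum (I : Type) (r : seq I) (P : pred I) (F : I -> (nat -> K) -> K) :
  (forall i, P i -> UCB (F i)) -> UCB (fun x => \sum_(i <- r | P i) F i x).
Proof.
move=> H; elim: r => [|i r IH].
  have -> : (fun x => \sum_(i <- [::] | P i) F i x) = fun _ => 0.
    by apply: funext => x; rewrite big_nil.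
  exact: UCB_cst.
have -> : (fun x => \sum_(j <- i :: r | P j) F j x) =
   (fun x => (if P i then F i x else 0) + \sum_(j <- r | P j) F j x).
  by apply: funext => x; rewrite big_cons; case: (P i); rewrite ?add0r.
apply: UCB_add => //; case Pi: (P i); [exact: H | exact: UCB_cst].
Qed.

Lemma UCB_prod (I : Type) (r : seq I) (P : pred I) (F : I -> (nat -> K) -> K) :
  (forall i, P i -> UCB (F i)) -> UCB (fun x => \prod_(i <- r | P i) F i x).
Proof.
move=> H; elim: r => [|i r IH].
  have -> : (fun x => \prod_(i <- [::] | P i) F i x) = fun _ => 1.
    by apply: funext => x; rewrite big_nil.
  exact: UCB_cst.
have -> : (fun x => \prod_(j <- i :: r | P j) F j x) =
   (fun x => (if P i then F i x else 1) * \prod_(j <- r | P j) F j x).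
  by apply: funext => x; rewrite big_cons; case: (P i); rewrite ?mul1r.
apply: UCB_mul => //; case Pi: (P i); [exact: H | exact: UCB_cst].
Qed.

Lemma nrmB x y : nrm (x - y) <= nrm x + nrm y.
Proof. by apply: le_trans (nrmD _ _) _; rewrite nrmN. Qed.

Hypothesis Hsum : forall (u : nat -> K) N B,
  (forall n, \sum_(N <= j < n) nrm (u j) <= B) ->
  nrm (limn (series u) - \sum_(j < N) u j) <= B.
Hypothesis m_ge0 : forall j, 0 <= m j.

Lemma tail_le (w : nat -> R) : (forall j, 0 <= w j) -> cvgn (series w) ->
  forall N n, \sum_(N <= j < n) w j <= limn (series w) - series w N.
Proof.
move=> w0 cw N n.
have nd : nondecreasing_seq (series w) by apply: nondecreasing_series.
have le := nondecreasing_cvgn_le nd cw.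
case: (leqP N n) => Nn.
  rewrite lerBrDl; apply: le_trans (le n); rewrite !seriesEnat /=.
  by rewrite -big_cat_nat.
by rewrite big_geq ?subr_ge0 // ltnW.
Qed.

Lemma UCB_pairing (a : nat -> K) d :
  cvgn (series (fun j => nrm (a j) * m j ^+ d)) -> UCB (fun x => pairing a x d).
Proof.
move=> cw; set w := fun j => _ in cw.
have w0 : forall j, 0 <= w j by move=> j; rewrite mulr_ge0 // exprn_ge0.
set A := limn (series w).
have Hu x : inB x -> forall j, nrm (a j * x j ^+ d) <= w j.
  move=> Bx j; rewrite nrmM nrmX; apply: ler_wpM2l => //.
  by apply: lerXn2r; rewrite ?nnegrE.
have tail x N : inB x -> nrm (pairing a x d - \sum_(j < N) a j * x j ^+ d) <= A - series w N.
  move=> Bx; rewrite /pairing; apply: Hsum => n; apply: le_trans _ (@tail_le w w0 cw N n).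
  by apply: ler_sum => j _; exact: Hu.
split.
  exists A => x Bx; have := tail x 0%N Bx.
  by rewrite big_ord0 subr0 seriesEnat /= big_geq // subr0.
move=> e e0.
have e3 : 0 < e / 3 by rewrite divr_gt0.
have [N HN] : exists N, A - series w N <= e / 3.
  have := (cvgrPdist_lt _ _).1 cw _ e3.
  case => N _ HN; exists N; have := HN N (leqnn N) => /=.
  by move/ltW; apply: le_trans; exact: ler_norm.
set M := 1 + \sum_(j < N) m j.
have Mge : forall j, (j < N)%N -> m j <= M.
  move=> j jN; rewrite /M (bigD1 (Ordinal jN)) //=.
  have : 0 <= \sum_(i < N | i != Ordinal jN) m i by apply: sumr_ge0.
  lra.
have M0 : 0 <= M.
  have : 0 <= \sum_(j < N) m j by apply: sumr_ge0.
  rewrite /M; lra.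
set Q := \sum_(j < N) nrm (a j) * (d%:R * M ^+ d.-1).
have Q0 : 0 <= Q.
  by apply: sumr_ge0 => j _; rewrite mulr_ge0 // mulr_ge0 // exprn_ge0.
have Q1 : 0 < Q + 1 by lra.
exists N; exists (e / 3 / (Q + 1)); first by rewrite divr_gt0.
move=> x y Bx By Hxy.
have Hfin : nrm (\sum_(j < N) a j * x j ^+ d - \sum_(j < N) a j * y j ^+ d) <= e / 3.
  rewrite -sumrB; apply: le_trans (nrm_sum _ _ _ _) _.
  apply: le_trans (_ : \sum_(j < N) nrm (a j) * (d%:R * M ^+ d.-1) * (e / 3 / (Q + 1)) <= _).
    apply: ler_sum => j _; rewrite -mulrBr subrXX !nrmM -mulrA.
    apply: ler_wpM2l => //; rewrite mulrC; apply: ler_pM => //.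
      apply: le_trans (nrm_sum _ _ _ _) _.
      have <- : \sum_(i < d) M ^+ d.-1 = d%:R * M ^+ d.-1.
        by rewrite sumr_const card_ord mulr_natl.
      apply: ler_sum => i _; rewrite nrmM !nrmX.
      have -> : M ^+ d.-1 = M ^+ (d.-1 - i) * M ^+ i.
        rewrite -exprD subnK //; have := ltn_ord i; lia.
      apply: ler_pM; rewrite ?exprn_ge0 //; apply: lerXn2r; rewrite ?nnegrE //;
        apply: le_trans (Mge _ (ltn_ord j)); [exact: Bx | exact: By].
    exact: ltW (Hxy _ (ltn_ord j)).
  rewrite -mulr_suml -/Q.
  have -> : Q * (e / 3 / (Q + 1)) = e / 3 * (Q / (Q + 1)) by ring.
  rewrite -[X in _ <= X]mulr1; apply: ler_wpM2l; first exact: ltW.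
  by rewrite ler_pdivrMr // mul1r lerDl.
have -> : pairing a x d - pairing a y d =
   (pairing a x d - \sum_(j < N) a j * x j ^+ d) - (pairing a y d - \sum_(j < N) a j * y j ^+ d)
   + (\sum_(j < N) a j * x j ^+ d - \sum_(j < N) a j * y j ^+ d) by ring.
set X1 := pairing a x d - _; set Y1 := pairing a y d - _.
apply: le_trans (nrmD _ _) _; have := nrmB X1 Y1.
have := tail x N Bx; have := tail y N By; rewrite -/X1 -/Y1; lra.
Qed.
End UCB.
Arguments inB {R K} nrm m x.
Arguments UCB {R K} nrm m f.

Section Compactness.
Import ArrowAsProduct.
Variable (R : realType).

Lemma nbhs_R_ball (c : R) d : 0 < d -> nbhs c [set t : R | `|t - c| < d].
Proof.
move=> d0; rewrite -filter_from_norm_nbhs; exists d => // t /=.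
by rewrite distrC.
Qed.

Lemma box_nbhs (z : nat -> R) N (d : R) : 0 < d ->
  nbhs z [set w : nat -> R | forall n, (n < N)%N -> `|w n - z n| < d].
Proof.
move=> d0; elim: N => [|N IH].
  by apply: filterS filterT => w _ n; rewrite ltn0.
have HN : nbhs z [set w : nat -> R | `|w N - z N| < d].
  exact: (@proj_continuous nat (fun _ => R) N z _ (nbhs_R_ball (z N) d d0)).
apply: filterS (filterI IH HN) => w [H1 H2] n.
by rewrite ltnS leq_eqVlt => /orP[/eqP->|/H1].
Qed.

Lemma box_compact (m' : nat -> R) :
  compact [set z : nat -> R | forall n, `|z n| <= m' n].
Proof.
have := @tychonoff nat (fun _ => R) (fun n => `[- m' n, m' n]%classic)
  (fun n => @segment_compact R _ _).
congr compact; apply/seteqP; split => z /= H n; have := H n;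
  by rewrite /= in_itv /= ler_norml.
Qed.

Variables (K : numFieldType) (nrm : K -> R).
Hypothesis nrm_ge0 : forall x, 0 <= nrm x.
Hypothesis nrmD : forall x y, nrm (x + y) <= nrm x + nrm y.
Hypothesis nrmN : forall x, nrm (- x) = nrm x.
Hypothesis nrm_eq0 : forall x, nrm x = 0 -> x = 0.
Variables (m m' : nat -> R) (phi : (nat -> R) -> nat -> K).
Hypothesis HT2 : forall x, inB nrm m x ->
  exists z, (forall n, `|z n| <= m' n) /\ phi z = x.
Hypothesis HT3 : forall j (e : R), 0 < e -> exists N, exists2 d, 0 < d &
  forall z w, (forall n, (n < N)%N -> `|w n - z n| < d) -> nrm (phi w j - phi z j) < e.

Lemma phi_nbhs z J (e : R) : 0 < e ->
  nbhs z [set w | forall j, (j < J)%N -> nrm (phi w j - phi z j) < e].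
Proof.
move=> e0; elim: J => [|J IH].
  by apply: filterS filterT => w _ n; rewrite ltn0.
have [N [d d0 Hd]] := HT3 J e e0.
have HN : nbhs z [set w | nrm (phi w J - phi z J) < e].
  by apply: filterS (box_nbhs z N d d0) => w /Hd.
apply: filterS (filterI IH HN) => w [H1 H2] n.
by rewrite ltnS leq_eqVlt => /orP[/eqP->|/H1].
Qed.

Theorem fip_solve (I : Type) (f : I -> (nat -> K) -> K) :
  (forall i, UCB nrm m (f i)) ->
  (forall eps : R, 0 < eps -> forall S : set I, finite_set S ->
     exists x, inB nrm m x /\ forall i, S i -> nrm (f i x) <= eps) ->
  exists x, inB nrm m x /\ forall i, f i x = 0.
Proof.
move=> Uf Hfip.
set BX := [set z : nat -> R | forall n, `|z n| <= m' n].
set D := [set p : set I * R | finite_set p.1 /\ 0 < p.2].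
set G := fun p : set I * R => [set z | BX z /\ inB nrm m (phi z) /\
   forall i, p.1 i -> nrm (f i (phi z)) <= p.2].
have FF : Filter (filter_from D G).
  apply: filter_from_filter; first by exists (set0, 1); split => //=; exact: finite_set0.
  move=> [S1 e1] [S2 e2] [/= fS1 e10] [/= fS2 e20].
  exists (S1 `|` S2, Num.min e1 e2).
    by split => /=; [rewrite finite_setU | rewrite lt_min e10 e20].
  move=> z [Bz [Iz Hz]]; split; (split; [exact: Bz | split; [exact: Iz | move=> i Si /=]]).
  - by apply: le_trans (Hz i (or_introl Si)) _; rewrite ge_min lexx.
  - by apply: le_trans (Hz i (or_intror Si)) _; rewrite ge_min lexx orbT.
have PF : ProperFilter (filter_from D G).
  apply: filter_from_proper => -[S e] [/= fS e0].
  have [x [Bx Hx]] := Hfip e e0 S fS.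
  have [z [Bz Ez]] := HT2 x Bx.
  by exists z; rewrite /G /= Ez.
have FBX : filter_from D G BX.
  by exists (set0, 1); [split => //=; exact: finite_set0 | move=> z []].
have [z [BXz clz]] := box_compact m' (filter_from D G) PF FBX.
have FG0 : filter_from D G (G (set0, 1)).
  by apply: in_filter_from; split => //=; exact: finite_set0.
have Bz : inB nrm m (phi z).
  move=> j; apply/ler_addgt0Pr => e e0.
  have [w [[_ [Bw _]] Ww]] := clz _ _ FG0 (phi_nbhs z j.+1 e e0).
  have h := Ww j (ltnSn j).
  have E : phi z j = phi w j + - (phi w j - phi z j) by ring.
  have := nrmD (phi w j) (- (phi w j - phi z j)); rewrite nrmN -E.
  have := Bw j; have := ltW h; lra.
exists (phi z); split => // i.
apply: nrm_eq0; apply/eqP; rewrite eq_le nrm_ge0 andbT; apply/ler_addgt0Pr => e e0.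
rewrite add0r.
have [_ Ui] := Uf i; have e2 : 0 < e / 2 by rewrite divr_gt0.
have [N [d d0 Hd]] := Ui _ e2.
have FGi : filter_from D G (G ([set i], e / 2)).
  by apply: in_filter_from; split => //=; exact: finite_set1.
have [w [[_ [Bw Hw]] Ww]] := clz _ _ FGi (phi_nbhs z N d d0).
have h1 := Hw i erefl.
have h2 := Hd (phi w) (phi z) Bw Bz Ww.
have E : f i (phi z) = f i (phi w) + - (f i (phi w) - f i (phi z)) by ring.
have := nrmD (f i (phi w)) (- (f i (phi w) - f i (phi z))); rewrite nrmN -E.
move: h1 h2 => /=; lra.
Qed.
End Compactness.

Section RealLemmas.
Variable R : realType.

Lemma young_like (a b r : R) (d : nat) : (1 <= d)%N -> d%:R < r -> 0 <= a -> 0 <= b ->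
  a * b ^+ d <= a `^ (r / (r - d%:R)) + b `^ r.
Proof.
move=> d1 dr a0 b0.
have r0 : 0 < r by apply: le_lt_trans dr; rewrite ler0n.
have rd0 : 0 < r - d%:R by rewrite subr_gt0.
have pa := powR_ge0 a (r / (r - d%:R)); have pb := powR_ge0 b r.
have [->|an0] := eqVneq a 0; first by rewrite mul0r addr_ge0.
have [->|bn0] := eqVneq b 0; first by rewrite expr0n (_ : (d == 0%N) = false) ?mulr0 ?addr_ge0 //; case: (d) d1.
have ap : 0 < a by rewrite lt_neqAle eq_sym an0 a0.
have bp : 0 < b by rewrite lt_neqAle eq_sym bn0 b0.
rewrite /powR (negbTE an0) (negbTE bn0).
rewrite -{1}(lnK ap) -{1}(lnK bp) -expRM_natl -expRD.
set A := ln a; set B := ln b; set X := r / (r - d%:R) * A; set Y := r * B.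
have hX : X * (r - d%:R) = r * A by rewrite /X mulrAC divfK // gt_eqF.
have [XY|YX] := leP X Y.
  apply: le_trans (_ : expR Y <= _); last by rewrite lerDr expR_ge0.
  rewrite ler_expR -(ler_pM2r r0).
  have : (A + d%:R * B) * r = X * (r - d%:R) + Y * d%:R by rewrite hX /Y; ring.
  move=> ->; have : X * (r - d%:R) <= Y * (r - d%:R) by rewrite ler_pM2r.
  rewrite /Y; lra.
apply: le_trans (_ : expR X <= _); last by rewrite lerDl expR_ge0.
rewrite ler_expR -(ler_pM2r r0).
have : (A + d%:R * B) * r = X * (r - d%:R) + Y * d%:R by rewrite hX /Y; ring.
move=> ->; have : Y * d%:R <= X * d%:R by rewrite ler_wpM2r // ltW.
rewrite /Y; lra.
Qed.

Variables (K : numFieldType) (nrm : K -> R).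
Hypothesis nrm_ge0 : forall x, 0 <= nrm x.

Lemma holder_cvg (q : \bar R) (d : nat) (a : nat -> K) (m : nat -> R) :
  (1 <= d)%N -> (d%:R%:E < q)%E -> (forall j, 0 <= m j) ->
  in_lp nrm (dual_exp q d) a -> in_lp (fun r : R => `|r|) q m ->
  cvgn (series (fun j => nrm (a j) * m j ^+ d)).
Proof.
move=> d1 dq m0; case: q dq => [r| |] //= dr.
- rewrite lte_fin in dr => ca cm.
  apply: (@series_le_cvg _ _ (fun j => nrm (a j) `^ (r / (r - d%:R)) + `|m j| `^ r)).
  + by move=> j; rewrite mulr_ge0 // exprn_ge0.
  + by move=> j; rewrite addr_ge0 // powR_ge0.
  + by move=> j; rewrite ger0_norm //; apply: young_like.
  + exact: is_cvg_seriesD ca cm.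
- move=> ca [M HM].
  have M0 : 0 <= M by apply: le_trans (HM 0%N).
  apply: (@series_le_cvg _ _ (fun j => M ^+ d * nrm (a j) `^ 1)).
  + by move=> j; rewrite mulr_ge0 // exprn_ge0.
  + by move=> j; rewrite mulr_ge0 ?exprn_ge0 // powR_ge0.
  + move=> j; rewrite powRr1 // mulrC; apply: ler_wpM2r => //.
    by apply: lerXn2r; rewrite ?nnegrE //; apply: le_trans (ler_norm _) (HM j).
  + exact: is_cvg_seriesZ ca.
Qed.

Lemma lp_dom (q : \bar R) (x : nat -> K) (m : nat -> R) : (0%:E <= q)%E ->
  (forall j, nrm (x j) <= m j) -> in_lp (fun r : R => `|r|) q m -> in_lp nrm q x.
Proof.
case: q => [r| |] //= r0 Hx.
- rewrite lee_fin in r0 => cm.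
  apply: (@series_le_cvg _ _ (fun j => `|m j| `^ r)) => // j; rewrite ?powR_ge0 //.
  apply: ge0_ler_powR; rewrite ?nnegrE //; exact: le_trans (Hx j) (ler_norm _).
- move=> [M HM]; exists M => j; exact: le_trans (Hx j) (le_trans (ler_norm _) (HM j)).
Qed.

Lemma abs_cvg_R (u : nat -> R) {N B} : (forall n, \sum_(N <= j < n) `|u j| <= B) ->
  cvgn (series u).
Proof.
move=> HB; apply: normed_cvg; change (cvgn (series (fun j => `|u j|))).
have B0 : 0 <= B by have := HB N; rewrite big_geq.
have nd : nondecreasing_seq (series (fun j => `|u j|)).
  by apply: nondecreasing_series => j _ _; exact: normr_ge0.
apply: nondecreasing_is_cvgn; first exact: nd.
exists (series (fun j => `|u j|) N + B) => _ [n _ <-].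
case: (leqP N n) => Nn.
  by rewrite !seriesEnat /= (big_cat_nat (leq0n N) Nn) /= lerD2l.
apply: le_trans (nd _ _ (ltnW Nn)) _; rewrite lerDl //.
Qed.

Lemma Hsum_R (u : nat -> R) N B : (forall n, \sum_(N <= j < n) `|u j| <= B) ->
  `|limn (series u) - \sum_(j < N) u j| <= B.
Proof.
move=> HB; have cu := abs_cvg_R u HB.
apply: (@cvgr_to_le _ \oo _ _ (fun n => `|series u n - \sum_(j < N) u j|)).
  by apply: cvg_norm; apply: cvgB => //; exact: cvg_cst.
apply: filterS (nbhs_infty_ge N) => n /= Nn.
rewrite seriesEnat /= (big_cat_nat (leq0n N) Nn) /= big_mkord addrAC subrr add0r.
by apply: le_trans (HB n); apply: ler_norm_sum.
Qed.
End RealLemmas.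

Section Assembly.
Variables (R : realType) (K : numFieldType) (nrm : K -> R).
Hypothesis nrm_ge0 : forall x, 0 <= nrm x.
Hypothesis nrmD : forall x y, nrm (x + y) <= nrm x + nrm y.
Hypothesis nrmM : forall x y, nrm (x * y) = nrm x * nrm y.
Hypothesis nrmN : forall x, nrm (- x) = nrm x.
Hypothesis nrm0 : nrm 0 = 0.
Hypothesis nrm1 : nrm 1 = 1.
Hypothesis nrm_eq0 : forall x, nrm x = 0 -> x = 0.
Hypothesis Hsum : forall (u : nat -> K) N B,
  (forall n, \sum_(N <= j < n) nrm (u j) <= B) ->
  nrm (limn (series u) - \sum_(j < N) u j) <= B.
Hypothesis Hphi : forall m : nat -> R, exists m' : nat -> R,
  exists phi : (nat -> R) -> nat -> K,
  (forall x, inB nrm m x -> exists z, (forall n, `|z n| <= m' n) /\ phi z = x) /\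
  (forall j (e : R), 0 < e -> exists N, exists2 d, 0 < d &
     forall z w, (forall n, (n < N)%N -> `|w n - z n| < d) -> nrm (phi w j - phi z j) < e).

Lemma theorem5_generic : theorem5_statement nrm.
Proof.
move=> D q I a b m D1 Dq Iinf Ha Hm Hm0 Hfip.
have [m' [phi [HT2 HT3]]] := Hphi m.
have Uf : forall i, UCB nrm m (fun x => Ppoly D (a i) x - b i).
  move=> i; apply: (@UCB_add R K nrm nrmD m); last exact: (@UCB_cst R K nrm nrm0 m).
  rewrite /Ppoly; apply: (@UCB_sum R K nrm nrmD nrm0 m) => k _.
  apply: (@UCB_sum R K nrm nrmD nrm0 m) => t _.
  apply: (@UCB_prod R K nrm nrm_ge0 nrmD nrmM nrm0 m) => l _.
  apply: (@UCB_pairing R K nrm nrm_ge0 nrmD nrmM nrmN nrm0 nrm1 m Hsum Hm0).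
  apply: (@holder_cvg R K nrm nrm_ge0 q) => //.
    apply: le_lt_trans Dq; rewrite lee_fin ler_nat; exact: ltn_ord.
  by apply: Ha; rewrite ltn_ord.
have Hfip' : forall eps : R, 0 < eps -> forall S : set I, finite_set S ->
    exists x, inB nrm m x /\ forall i, S i -> nrm (Ppoly D (a i) x - b i) <= eps.
  by move=> eps e0 S fS; have [x [_ Bx Hx]] := Hfip eps e0 S fS; exists x.
have [x [Bx Hx]] := @fip_solve R K nrm nrm_ge0 nrmD nrmN nrm_eq0 m m' phi HT2 HT3 I _ Uf Hfip'.
exists x; split => //.
  apply: (@lp_dom R K nrm nrm_ge0 q x m) => //.
  apply: le_trans (ltW Dq); rewrite lee_fin ler0n //.
by move=> i; apply/eqP; rewrite -subr_eq0; apply/eqP.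
Qed.
End Assembly.

Lemma theorem5_R (R : realType) : theorem5_statement (fun r : R => `|r|).
Proof.
apply: (@theorem5_generic R R (fun r => `|r|)).
- exact: normr_ge0.
- exact: ler_normD.
- exact: normrM.
- exact: normrN.
- exact: normr0.
- exact: normr1.
- exact: normr0_eq0.
- exact: Hsum_R.
- move=> m; exists m, id; split.
    by move=> x Bx; exists x.
  move=> j e e0; exists j.+1; exists e => // z w H; exact: H j (ltnSn j).
Qed.

Section Cplx.
Variable R : realType.
Local Notation nc := (@Normc.normc R).
Local Open Scope complex_scope.

Lemma nc_def (x : R[i]) : nc x = Num.sqrt (complex.Re x ^+ 2 + complex.Im x ^+ 2).
Proof. by case: x. Qed.

Lemma nc_ge0 (x : R[i]) : 0 <= nc x.
Proof. by rewrite nc_def sqrtr_ge0. Qed.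

Lemma nc_Re (x : R[i]) : `|complex.Re x| <= nc x.
Proof.
by rewrite nc_def -sqrtr_sqr ler_sqrt ?addr_ge0 ?sqr_ge0 // lerDl sqr_ge0.
Qed.

Lemma nc_Im (x : R[i]) : `|complex.Im x| <= nc x.
Proof.
by rewrite nc_def -sqrtr_sqr ler_sqrt ?addr_ge0 ?sqr_ge0 // lerDr sqr_ge0.
Qed.

Lemma sqrt_le_sum (p q : R) : Num.sqrt (p ^+ 2 + q ^+ 2) <= `|p| + `|q|.
Proof.
rewrite -[X in _ <= X]ger0_norm ?addr_ge0 // -sqrtr_sqr ler_sqrt ?sqr_ge0 //.
rewrite -[p ^+ 2]real_normK ?num_real // -[q ^+ 2]real_normK ?num_real //.
have := normr_ge0 p; have := normr_ge0 q; nra.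
Qed.

Lemma ReD (x y : R[i]) : complex.Re (x + y) = complex.Re x + complex.Re y. Proof. by case: x y => a b [c d]. Qed.
Lemma ImD (x y : R[i]) : complex.Im (x + y) = complex.Im x + complex.Im y. Proof. by case: x y => a b [c d]. Qed.
Lemma ReB (x y : R[i]) : complex.Re (x - y) = complex.Re x - complex.Re y. Proof. by case: x y => a b [c d]. Qed.
Lemma ImB (x y : R[i]) : complex.Im (x - y) = complex.Im x - complex.Im y. Proof. by case: x y => a b [c d]. Qed.

Lemma Re_sum (I : Type) (r : seq I) (P : pred I) (F : I -> R[i]) :
  complex.Re (\sum_(i <- r | P i) F i) = \sum_(i <- r | P i) complex.Re (F i).
Proof.
elim: r => [|i r IH]; first by rewrite !big_nil.
by rewrite !big_cons; case: (P i); rewrite ?ReD IH.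
Qed.

Lemma Im_sum (I : Type) (r : seq I) (P : pred I) (F : I -> R[i]) :
  complex.Im (\sum_(i <- r | P i) F i) = \sum_(i <- r | P i) complex.Im (F i).
Proof.
elim: r => [|i r IH]; first by rewrite !big_nil.
by rewrite !big_cons; case: (P i); rewrite ?ImD IH.
Qed.

Definition HsumP (K : numFieldType) (nrm : K -> R) := forall (u : nat -> K) N B,
  (forall n, \sum_(N <= j < n) nrm (u j) <= B) ->
  nrm (limn (series u) - \sum_(j < N) u j) <= B.

Lemma Hsum_C : @HsumP _ nc.
Proof.
move=> u N B HB; set L := limn _.
have B0 : 0 <= B by have := HB N; rewrite big_geq.
set ur := fun j => complex.Re (u j); set ui := fun j => complex.Im (u j).
have cr : cvgn (series ur).
  apply: (@abs_cvg_R R ur N B) => n; apply: le_trans (HB n).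
  by apply: ler_sum => j _; exact: nc_Re.
have ci : cvgn (series ui).
  apply: (@abs_cvg_R R ui N B) => n; apply: le_trans (HB n).
  by apply: ler_sum => j _; exact: nc_Im.
set lr := limn (series ur); set li := limn (series ui).
have sRe n : complex.Re (series u n) = series ur n by rewrite !seriesEnat /= Re_sum.
have sIm n : complex.Im (series u n) = series ui n by rewrite !seriesEnat /= Im_sum.
have -> : L = (lr +i* li : R[i]).
  rewrite /L; apply: norm_cvg_lim; apply/cvgrPdist_lt => eps; rewrite ltcE /= => /andP[/eqP Ie Re0].
  have e2 : 0 < complex.Re eps / 2 by rewrite divr_gt0.
  have h1 := (cvgrPdist_lt _ _).1 cr _ e2.
  have h2 := (cvgrPdist_lt _ _).1 ci _ e2.
  case: h1 => N1 _ H1; case: h2 => N2 _ H2; exists (maxn N1 N2) => // n /= Nn.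
  have {H1} := H1 n (leq_trans (leq_maxl _ _) Nn); have {H2} := H2 n (leq_trans (leq_maxr _ _) Nn).
  move=> /= H2 H1.
  rewrite normc_def ltcE /= Ie eqxx /= ReB ImB sRe sIm /=.
  apply: le_lt_trans (sqrt_le_sum _ _) _; lra.
set c := \sum_(j < N) u j.
have key : (lr - complex.Re c) ^+ 2 + (li - complex.Im c) ^+ 2 <= B ^+ 2.
  apply: (@cvgr_to_le _ \oo _ _ (fun n => (series ur n - complex.Re c) * (series ur n - complex.Re c) +
      (series ui n - complex.Im c) * (series ui n - complex.Im c))).
    rewrite !expr2; apply: cvgD; apply: cvgM; apply: cvgB => //; exact: cvg_cst.
  apply: filterS (nbhs_infty_ge N) => n /= Nn.
  have : nc (series u n - c) <= B.
    rewrite seriesEnat /= (big_cat_nat (leq0n N) Nn) /= big_mkord /c addrAC subrr add0r.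
    apply: le_trans (HB n).
    exact: (@nrm_sum R _ nc (@le_normcD R) (@Normc.normc0 R) nat (index_iota N n) xpredT u).
  rewrite nc_def ReB ImB sRe sIm -!expr2 => H.
  have X0 : 0 <= (series ur n - complex.Re c) ^+ 2 + (series ui n - complex.Im c) ^+ 2 by rewrite addr_ge0 ?sqr_ge0.
  rewrite -(sqr_sqrtr X0); apply: lerXn2r; rewrite ?nnegrE ?sqrtr_ge0 //.
rewrite nc_def ReB ImB /= -(ger0_norm B0) -sqrtr_sqr ler_sqrt ?sqr_ge0 //.
Qed.

Lemma theorem5_C : theorem5_statement nc.
Proof.
apply: (@theorem5_generic R R[i] nc).
- exact: nc_ge0.
- exact: le_normcD.
- exact: Normc.normcM.
- exact: normcN.
- exact: Normc.normc0.
- exact: Normc.normc1.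
- exact: Normc.eq0_normc.
- exact: Hsum_C.
- move=> m; exists (fun n => m n./2), (fun z j => z (j.*2) +i* z (j.*2).+1); split.
    move=> x Bx; exists (fun n => if odd n then complex.Im (x n./2) else complex.Re (x n./2)); split.
      move=> n; case: (odd n); [exact: le_trans (nc_Im _) (Bx _) |
                                exact: le_trans (nc_Re _) (Bx _)].
    apply: funext => j /=; rewrite odd_double doubleK uphalf_double.
    by case: (x j).
  move=> j e e0; exists (j.*2).+2; exists (e / 2); first by rewrite divr_gt0.
  move=> z w H.
  have h1 := H (j.*2) (leqW (leqnn _)).
  have h2 := H (j.*2).+1 (leqnn _).
  rewrite nc_def ReB ImB /=.
  apply: le_lt_trans (sqrt_le_sum _ _) _; lra.
Qed.
End Cplx.

Theorem theorem5 (R : realType) :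
  @theorem5_statement R R (fun r : R => `|r|) /\
  @theorem5_statement R R[i] (@Normc.normc R).
Proof. split; [exact: theorem5_R | exact: theorem5_C]. Qed.
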